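(* Let $f_1,f_2$ be strongly hyperbolic functions and let $p_1,p_2,p_3\in\mathcal{P}$ be three points in admissible position. Then at least one element of $\mathcal{C}^-(f_1,f_2)$ contains $p_1,p_2,p_3$.
   Context: Identify $\mathbb{S}^1$ with $\mathbb{R}\cup\{\infty\}$, $\mathcal{P}=\mathbb{S}^1\times\mathbb{S}^1$, $\mathbb{R}^+=(0,\infty)$. A function $f:\mathbb{R}^+\to\mathbb{R}^+$ is strongly hyperbolic if: (1) $\lim_{x\to0+}f(x)=+\infty$, $\lim_{x\to+\infty}f(x)=0$; (2) $f$ strictly convex; (3) $\lim_{x\to+\infty}f(x+b)/f(x)=1$ for each $b\in\mathbb{R}$; (4) $f$ differentiable; (5) $\ln|f'|$ strictly convex. For $a>0$, $b,c\in\mathbb{R}$: $f_{a,b,c}(x)=af_1(x+b)+c$ for $x>-b$, $f_{a,b,c}(x)=-af_2(-x-b)+c$ for $x<-b$; $\overline{f_{a,b,c}}=\{(x,f_{a,b,c}(x)):x\ne-b\}\cup\{(-b,\infty),(\infty,c)\}$; $\overline{l_{s,t}}=\{(x,sx+t):x\in\mathbb{R}\}\cup\{(\infty,\infty)\}$; $\mathcal{C}^-(f_1,f_2)=\{\overline{f_{a,b,c}}:a>0,b,c\in\mathbb{R}\}\cup\{\overline{l_{s,t}}:s<0,t\in\mathbb{R}\}$. Three points are in admissible position if they are all contained in one set of the form $\{(x,sx+t):x\in\mathbb{R}\}\cup\{(\infty,\infty)\}$ with $s<0$, $t\in\mathbb{R}$, or of the form $\{(x,y)\in\mathbb{R}^2:(x-b)(y-c)=a\}\cup\{(\infty,c),(b,\infty)\}$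 with $a>0$, $b,c\in\mathbb{R}$ (the orientation-reversing circles of the classical flat Minkowski plane). *)

(* Defs.v *)
From Stdlib Require Import Reals Lra.
From Coquelicot Require Import Coquelicot.
Open Scope R_scope.

(* S^1 = R ∪ {∞}: [Some x] is the real x, [None] is ∞. *)
Definition S1 := option R.
Definition point := (S1 * S1)%type.

Definition strictly_convex_pos (g : R -> R) : Prop :=
  forall x y t, 0 < x -> 0 < y -> x <> y -> 0 < t < 1 ->
    g (t * x + (1 - t) * y) < t * g x + (1 - t) * g y.

(* f : R^+ -> R^+ is modelled by a total f : R -> R, only its values on
   (0,+oo) matter. *)
Definition strongly_hyperbolic (f : R -> R) : Prop :=
  (forall x, 0 < x -> 0 < f x) /\
  filterlim f (at_right 0) (Rbar_locally p_infty) /\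
  filterlim f (Rbar_locally p_infty) (locally 0) /\
  strictly_convex_pos f /\
  (forall b : R, filterlim (fun x => f (x + b) / f x) (Rbar_locally p_infty) (locally 1)) /\
  (forall x, 0 < x -> ex_derive f x) /\
  strictly_convex_pos (fun x => ln (Rabs (Derive f x))).

Definition fabc (f1 f2 : R -> R) (a b c : R) (x : R) : R :=
  if Rlt_dec (- b) x then a * f1 (x + b) + c else - a * f2 (- x - b) + c.

Definition fabc_bar (f1 f2 : R -> R) (a b c : R) (p : point) : Prop :=
  (exists x, x <> - b /\ p = (Some x, Some (fabc f1 f2 a b c x))) \/
  p = (Some (- b), None) \/ p = (None, Some c).

Definition lst_bar (s t : R) (p : point) : Prop :=
  (exists x, p = (Some x, Some (s * x + t))) \/ p = (None, None).

Definition in_Cminus (f1 f2 : R -> R) (C : point -> Prop) : Prop :=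
  (exists a b c, 0 < a /\ C = fabc_bar f1 f2 a b c) \/
  (exists s t, s < 0 /\ C = lst_bar s t).

(* orientation-reversing circle of the classical flat Minkowski plane *)
Definition hyp_bar (a b c : R) (p : point) : Prop :=
  (exists x y, (x - b) * (y - c) = a /\ p = (Some x, Some y)) \/
  p = (None, Some c) \/ p = (Some b, None).

Definition admissible (p1 p2 p3 : point) : Prop :=
  (exists s t, s < 0 /\ lst_bar s t p1 /\ lst_bar s t p2 /\ lst_bar s t p3) \/
  (exists a b c, 0 < a /\ hyp_bar a b c p1 /\ hyp_bar a b c p2 /\ hyp_bar a b c p3).

(* Main.v *)
Require Import Defs.
From Stdlib Require Import Reals Lra Classical.
From Coquelicot Require Import Coquelicot.
Open Scope R_scope.



Lemma ball_R (c e z : R) : ball c e z -> Rabs (z - c) < e.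
Proof. intros H. exact H. Qed.

Lemma R_ball (c e z : R) : Rabs (z - c) < e -> ball c e z.
Proof. intros H. exact H. Qed.


Lemma sh_pos (f : R -> R) (Hf : strongly_hyperbolic f) x : 0 < x -> 0 < f x.
Proof. destruct Hf as [H _]; auto. Qed.

Lemma sh_cont (f : R -> R) (Hf : strongly_hyperbolic f) x : 0 < x -> continuity_pt f x.
Proof.
  intros Hx. destruct Hf as (_&_&_&_&_&Hd&_).
  apply continuity_pt_filterlim. apply (ex_derive_continuous f x). auto.
Qed.

Lemma sh_conv (f : R -> R) (Hf : strongly_hyperbolic f) x y z : 0 < x -> x < y -> y < z ->
  (z - x) * f y < (z - y) * f x + (y - x) * f z.
Proof.
  intros Hx Hxy Hyz. destruct Hf as (_&_&_&Hc&_).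
  set (t := (z - y) / (z - x)).
  assert (Ht : 0 < t < 1).
  { unfold t; split. apply Rdiv_lt_0_compat; lra.
    apply (Rmult_lt_reg_r (z - x)). lra. unfold Rdiv. rewrite Rmult_assoc, Rinv_l by lra. lra. }
  assert (E : t * x + (1 - t) * z = y). { unfold t. field. lra. }
  assert (E2 : 1 - t = (y - x) / (z - x)). { unfold t. field. lra. }
  pose proof (Hc x z t Hx ltac:(lra) ltac:(lra) Ht) as H.
  rewrite E in H. rewrite E2 in H. unfold t in H.
  apply (Rmult_lt_compat_l (z - x)) in H; [|lra].
  replace ((z - x) * ((z - y) / (z - x) * f x + (y - x) / (z - x) * f z))
    with ((z - y) * f x + (y - x) * f z) in H by (field; lra).
  exact H.
Qed.

Lemma sh_lim0 (f : R -> R) (Hf : strongly_hyperbolic f) M : exists d, 0 < d /\ forall x, 0 < x < d -> M < f x.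
Proof.
  destruct Hf as (_&H&_).
  assert (HP : Rbar_locally p_infty (fun y => M < y)) by (exists M; auto).
  specialize (H _ HP). destruct H as [e He].
  exists e; split. apply cond_pos.
  intros x Hx. apply He. apply R_ball. rewrite Rminus_0_r, Rabs_pos_eq; lra. lra.
Qed.

Lemma sh_liminf (f : R -> R) (Hf : strongly_hyperbolic f) e : 0 < e -> exists N, forall x, N < x -> f x < e.
Proof.
  intros He. destruct Hf as (_&_&H&_).
  assert (HP : locally 0 (ball 0 (mkposreal e He))) by (exists (mkposreal e He); auto).
  specialize (H _ HP). destruct H as [N HN].
  exists N. intros x Hx. specialize (HN x Hx). apply ball_R in HN. simpl in HN.
  rewrite Rminus_0_r in HN. apply Rabs_def2 in HN. lra.
Qed.

Lemma sh_ratio (f : R -> R) (Hf : strongly_hyperbolic f) b e : 0 < e -> exists N, forall x, N < x -> Rabs (f (x + b) / f x - 1) < e.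
Proof.
  intros He. destruct Hf as (_&_&_&_&H&_).
  assert (HP : locally 1 (ball 1 (mkposreal e He))) by (exists (mkposreal e He); auto).
  specialize (H b _ HP). destruct H as [N HN].
  exists N. intros x Hx. specialize (HN x Hx). apply ball_R in HN. exact HN.
Qed.

Lemma sh_decr (f : R -> R) (Hf : strongly_hyperbolic f) x y : 0 < x -> x < y -> f y < f x.
Proof.
  intros Hx Hxy. destruct (Rlt_or_le (f y) (f x)) as [H|H]; auto. exfalso.
  assert (Hz : forall z, y < z -> f y < f z).
  { intros z Hz. pose proof (sh_conv f Hf x y z Hx Hxy Hz).
    assert ((z - y) * f x <= (z - y) * f y) by (apply Rmult_le_compat_l; lra).
    assert ((y - x) * f y < (y - x) * f z) by lra.
    apply Rmult_lt_reg_l in H2; lra. }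
  assert (Hy : 0 < f y) by (apply (sh_pos f Hf); lra).
  destruct (sh_liminf f Hf (f y) Hy) as [N HN].
  set (z := Rmax N y + 1).
  assert (N < z) by (unfold z; pose proof (Rmax_l N y); lra).
  assert (y < z) by (unfold z; pose proof (Rmax_r N y); lra).
  specialize (HN z H0). specialize (Hz z H1). lra.
Qed.


Lemma sh_exd f : strongly_hyperbolic f -> forall x, 0 < x -> ex_derive f x.
Proof. intros (_&_&_&_&_&Hd&_); auto. Qed.

Lemma clamp_cont lo hi x : continuity_pt (fun x => Rmax lo (Rmin hi x)) x.
Proof.
  unfold continuity_pt, continue_in, limit1_in, limit_in. intros eps Heps.
  exists eps. split; auto. intros y [_ Hy]. simpl in *. unfold R_dist in *.
  unfold Rmax, Rmin; repeat destruct Rle_dec; split_Rabs; lra.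
Qed.

Lemma ivt_int (G : R -> R) lo hi : lo < hi ->
  (forall x, lo <= x <= hi -> continuous G x) -> 0 < G lo -> G hi < 0 ->
  exists x, lo <= x <= hi /\ G x = 0.
Proof.
  intros Hlh Hc H1 H2.
  set (c := fun x => Rmax lo (Rmin hi x)).
  assert (Hc1 : forall x, lo <= c x <= hi).
  { intros x; unfold c, Rmax, Rmin; repeat destruct Rle_dec; lra. }
  assert (Hc2 : forall x, lo <= x <= hi -> c x = x).
  { intros x Hx; unfold c, Rmax, Rmin; repeat destruct Rle_dec; lra. }
  assert (HH : continuity (fun x => - G (c x))).
  { intros x. apply continuity_pt_opp. apply (continuity_pt_comp c G).
    apply clamp_cont. apply continuity_pt_filterlim. apply Hc. auto. }
  destruct (IVT _ lo hi HH Hlh) as [z [Hz1 Hz2]].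
  rewrite Hc2 by lra. lra. rewrite Hc2 by lra. lra.
  exists z. split; auto. rewrite Hc2 in Hz2 by auto. lra.
Qed.

Lemma test f (Hf : strongly_hyperbolic f) r d x : 0 < x -> 0 < d -> continuous (fun u => f u - r * f (u + d)) x.
Proof.
  intros. apply (@ex_derive_continuous R_AbsRing R_NormedModule). auto_derive. repeat split; apply sh_exd; auto; lra.
Qed.



Lemma p1_ratio f (Hf : strongly_hyperbolic f) x1 x2 y1 y2 c :
  x1 < x2 -> c < y2 -> y2 < y1 ->
  exists a b, 0 < a /\ 0 < x1 + b /\ a * f (x1 + b) + c = y1 /\ a * f (x2 + b) + c = y2.
Proof.
  intros H12 Hc Hy.
  set (d := x2 - x1). set (r := (y1 - c) / (y2 - c)).
  assert (Hr : 1 < r).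
  { unfold r. apply (Rmult_lt_reg_r (y2 - c)). lra. unfold Rdiv. rewrite Rmult_assoc, Rinv_l by lra. lra. }
  assert (Hd : 0 < d) by (unfold d; lra).
  destruct (sh_lim0 f Hf (r * f d)) as [del [Hdel Hlo]].
  set (lo := del / 2).
  assert (Glo : 0 < f lo - r * f (lo + d)).
  { specialize (Hlo lo ltac:(unfold lo; lra)).
    assert (f (lo + d) < f d) by (apply sh_decr; auto; unfold lo; lra).
    nra. }
  destruct (sh_ratio f Hf d (1 - / r)) as [N HN].
  { assert (/ r < 1). { rewrite <- Rinv_1. apply Rinv_lt_contravar; lra. } lra. }
  set (hi := Rmax N lo + 1).
  assert (Nhi : N < hi) by (unfold hi; pose proof (Rmax_l N lo); lra).
  assert (lohi : lo < hi) by (unfold hi; pose proof (Rmax_r N lo); lra).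
  assert (lo0 : 0 < lo) by (unfold lo; lra).
  assert (Ghi : f hi - r * f (hi + d) < 0).
  { specialize (HN hi Nhi). apply Rabs_def2 in HN. destruct HN as [_ HN].
    assert (Hp : 0 < f hi) by (apply sh_pos; auto; lra).
    assert (Hq : / r < f (hi + d) / f hi) by lra.
    apply (Rmult_lt_compat_l r) in Hq; [|lra]. rewrite Rinv_r in Hq by lra.
    apply (Rmult_lt_compat_r (f hi)) in Hq; auto.
    replace (r * (f (hi + d) / f hi) * f hi) with (r * f (hi + d)) in Hq by (field; lra). lra. }
  destruct (ivt_int (fun u => f u - r * f (u + d)) lo hi lohi) as [u [Hu Gu]]; auto.
  { intros x Hx. apply (@ex_derive_continuous R_AbsRing R_NormedModule). auto_derive.
    repeat split; apply sh_exd; auto; lra. }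
  simpl in Gu.
  assert (Hfu : 0 < f (u + d)) by (apply sh_pos; auto; lra).
  exists ((y2 - c) / f (u + d)), (u - x1). split; [|split; [|split]].
  - apply Rdiv_lt_0_compat; lra.
  - lra.
  - replace (x1 + (u - x1)) with u by ring. replace (f u) with (r * f (u + d)) by lra.
    unfold r. field. lra.
  - replace (x2 + (u - x1)) with (u + d) by (unfold d; ring). field. lra.
Qed.



Lemma p2_split f g (Hf : strongly_hyperbolic f) (Hg : strongly_hyperbolic g) x1 x2 y1 y2 c :
  x1 < x2 -> y1 < c -> c < y2 ->
  exists a b, 0 < a /\ x1 < - b < x2 /\ - a * g (- x1 - b) + c = y1 /\ a * f (x2 + b) + c = y2.
Proof.
  intros H12 Hc1 Hc2.
  set (D := x2 - x1).
  assert (HD : 0 < D) by (unfold D; lra).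
  destruct (sh_lim0 f Hf ((y2 - c) * g (D / 2) / (c - y1))) as [del [Hdel Hlo]].
  set (lo := Rmin del (D / 2) / 2).
  assert (lo0 : 0 < lo <= D / 4).
  { unfold lo, Rmin; destruct Rle_dec; lra. }
  assert (Glo : 0 < (c - y1) * f lo - (y2 - c) * g (D - lo)).
  { assert (H1 : (y2 - c) * g (D / 2) / (c - y1) < f lo).
    { apply Hlo. unfold lo, Rmin in *; destruct Rle_dec; lra. }
    assert (g (D - lo) < g (D / 2)) by (apply sh_decr; auto; lra).
    apply (Rmult_lt_compat_l (c - y1)) in H1; [|lra].
    replace ((c - y1) * ((y2 - c) * g (D / 2) / (c - y1))) with ((y2 - c) * g (D / 2)) in H1
      by (field; lra).
    nra. }
  destruct (sh_lim0 g Hg ((c - y1) * f (D / 2) / (y2 - c))) as [del' [Hdel' Hhi]].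
  set (w := Rmin del' (D / 2) / 2).
  assert (w0 : 0 < w <= D / 4).
  { unfold w, Rmin; destruct Rle_dec; lra. }
  set (hi := D - w).
  assert (Ghi : (c - y1) * f hi - (y2 - c) * g (D - hi) < 0).
  { assert (H1 : (c - y1) * f (D / 2) / (y2 - c) < g (D - hi)).
    { apply Hhi. unfold hi. replace (D - (D - w)) with w by ring. split; [lra|]. unfold w, Rmin; destruct Rle_dec; lra. }
    assert (f hi < f (D / 2)) by (apply sh_decr; auto; unfold hi; lra).
    apply (Rmult_lt_compat_l (y2 - c)) in H1; [|lra].
    replace ((y2 - c) * ((c - y1) * f (D / 2) / (y2 - c))) with ((c - y1) * f (D / 2)) in H1
      by (field; lra).
    nra. }
  destruct (ivt_int (fun u => (c - y1) * f u - (y2 - c) * g (D - u)) lo hi) as [u [Hu Gu]];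
    auto.
  { unfold hi; lra. }
  { intros x Hx. apply (@ex_derive_continuous R_AbsRing R_NormedModule). auto_derive.
    unfold hi in Hx.
    repeat split; [apply (sh_exd f Hf)|apply (sh_exd g Hg)]; lra. }
  simpl in Gu. unfold hi in Hu.
  assert (Hfu : 0 < f u) by (apply sh_pos; auto; lra).
  exists ((y2 - c) / f u), (u - x2). split; [|split; [|split]].
  - apply Rdiv_lt_0_compat; lra.
  - unfold D in *; lra.
  - replace (- x1 - (u - x2)) with (D - u) by (unfold D; ring).
    replace (g (D - u)) with ((c - y1) * f u / (y2 - c)). field. split; lra.
    field_simplify_eq; [|lra]. lra.
  - replace (x2 + (u - x2)) with u by ring. field. lra.
Qed.



Lemma p3_hi f (Hf : strongly_hyperbolic f) d1 d2 A B :
  0 < d1 -> d1 < d2 -> 0 < A -> 0 < B -> B * d1 < A * (d2 - d1) ->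
  exists u, 0 < u /\ B * (f u - f (u + d1)) - A * (f (u + d1) - f (u + d2)) < 0.
Proof.
  intros Hd1 Hd2 HA HB Hq.
  apply NNPP. intros Hn.
  assert (HG : forall u, 0 < u -> A * (f (u + d1) - f (u + d2)) <= B * (f u - f (u + d1))).
  { intros u Hu. apply Rnot_lt_le. intros Hl. apply Hn. exists u. split; auto. lra. }
  set (K1 := B * d1). set (K2 := A * (d2 - d1)).
  assert (HK1 : 0 < K1) by (unfold K1; nra).
  assert (HK12 : K1 < K2) by (unfold K1, K2; lra).
  set (E := 1 + d2).
  set (F := fun v => K1 * f v - K2 * f (v + E)).
  assert (Hstep : forall v, 0 < v -> F (v + 1) <= F v).
  { intros v Hv. set (u := v + 1).
    pose proof (sh_conv f Hf v u (u + d1) Hv ltac:(unfold u; lra) ltac:(lra)) as C1.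
    pose proof (sh_conv f Hf (u + d1) (u + d2) (u + d2 + 1) ltac:(unfold u; lra) ltac:(lra) ltac:(lra)) as C2.
    specialize (HG u ltac:(unfold u; lra)).
    unfold F. replace (v + 1 + E) with (u + d2 + 1) by (unfold u, E; ring).
    replace (v + E) with (u + d2) by (unfold u, E; ring). fold u.
    replace (u + d1 - v) with (d1 + 1) in C1 by (unfold u; ring).
    replace (u + d1 - u) with d1 in C1 by ring.
    replace (u - v) with 1 in C1 by (unfold u; ring).
    replace (u + d2 + 1 - (u + d1)) with (d2 - d1 + 1) in C2 by ring.
    replace (u + d2 + 1 - (u + d2)) with 1 in C2 by ring.
    replace (u + d2 - (u + d1)) with (d2 - d1) in C2 by ring.
    assert (B * (f u - f (u + d1)) < B * (d1 * (f v - f u))) by (apply Rmult_lt_compat_l; lra).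
    assert (A * ((d2 - d1) * (f (u + d2) - f (u + d2 + 1))) < A * (f (u + d1) - f (u + d2))) by (apply Rmult_lt_compat_l; lra).
    replace (u + E) with (u + d2 + 1) by (unfold E; ring). unfold K1, K2. lra. }
  assert (Hn2 : forall n v, 0 < v -> F (v + INR n) <= F v).
  { induction n; intros v Hv. simpl. rewrite Rplus_0_r; lra.
    rewrite S_INR. replace (v + (INR n + 1)) with (v + INR n + 1) by ring.
    pose proof (pos_INR n). pose proof (Hstep (v + INR n) ltac:(lra)).
    pose proof (IHn v Hv). lra. }
  assert (Hpos : forall v, 0 < v -> 0 <= F v).
  { intros v Hv. apply Rnot_lt_le. intros Hlt.
    assert (HK2 : 0 < K2) by lra.
    destruct (sh_liminf f Hf (- F v / K2)) as [N HN].
    { apply Rdiv_lt_0_compat; lra. }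
    destruct (INR_unbounded (N - v)) as [n Hn'].
    pose proof (Hn2 n v Hv).
    set (w := v + INR n) in *.
    assert (f (w + E) < - F v / K2) by (apply HN; unfold w, E; lra).
    assert (0 < f w) by (apply (sh_pos f Hf); unfold w; pose proof (pos_INR n); lra).
    apply (Rmult_lt_compat_l K2) in H0; auto.
    replace (K2 * (- F v / K2)) with (- F v) in H0 by (field; lra).
    unfold F in H at 1. nra. }
  destruct (sh_ratio f Hf E (1 - K1 / K2)) as [N HN].
  { assert (K1 / K2 < 1). { apply (Rmult_lt_reg_r K2). lra. unfold Rdiv. rewrite Rmult_assoc, Rinv_l by lra. lra. } lra. }
  set (v := Rmax N 0 + 1).
  assert (Hv : 0 < v) by (unfold v; pose proof (Rmax_r N 0); lra).
  assert (HvN : N < v) by (unfold v; pose proof (Rmax_l N 0); lra).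
  specialize (HN v HvN). specialize (Hpos v Hv). unfold F in Hpos.
  apply Rabs_def2 in HN. destruct HN as [_ HN].
  assert (Hfv : 0 < f v) by (apply (sh_pos f Hf); auto).
  assert (K1 / K2 < f (v + E) / f v) by lra.
  apply (Rmult_lt_compat_r (K2 * f v)) in H; [|nra].
  replace (K1 / K2 * (K2 * f v)) with (K1 * f v) in H by (field; lra).
  replace (f (v + E) / f v * (K2 * f v)) with (K2 * f (v + E)) in H by (field; lra).
  lra.
Qed.

Lemma p3_convex f (Hf : strongly_hyperbolic f) x1 x2 x3 y1 y2 y3 :
  x1 < x2 -> x2 < x3 -> y2 < y1 -> y3 < y2 ->
  (y2 - y3) * (x2 - x1) < (y1 - y2) * (x3 - x2) ->
  exists a b c, 0 < a /\ 0 < x1 + b /\ a * f (x1 + b) + c = y1 /\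
    a * f (x2 + b) + c = y2 /\ a * f (x3 + b) + c = y3.
Proof.
  intros H12 H23 Hy12 Hy23 Hcv.
  set (A := y1 - y2). set (B := y2 - y3). set (d1 := x2 - x1). set (d2 := x3 - x1).
  destruct (p3_hi f Hf d1 d2 A B) as [hi [Hhi Ghi]]; try (unfold A, B, d1, d2 in *; lra).
  destruct (sh_lim0 f Hf ((A + B) * f d1 / B)) as [del [Hdel Hlo]].
  set (lo := Rmin del hi / 2).
  assert (lo0 : 0 < lo < hi /\ lo < del).
  { unfold lo, Rmin; destruct Rle_dec; lra. }
  assert (Hd1 : 0 < d1) by (unfold d1; lra).
  assert (Hd12 : d1 < d2) by (unfold d1, d2; lra).
  assert (HB : 0 < B) by (unfold B; lra).
  assert (HA : 0 < A) by (unfold A; lra).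
  assert (Glo : 0 < B * (f lo - f (lo + d1)) - A * (f (lo + d1) - f (lo + d2))).
  { assert (H1 : (A + B) * f d1 / B < f lo) by (apply Hlo; lra).
    assert (f (lo + d1) < f d1) by (apply sh_decr; auto; lra).
    assert (0 < f (lo + d2)) by (apply sh_pos; auto; lra).
    apply (Rmult_lt_compat_l B) in H1; [|lra].
    replace (B * ((A + B) * f d1 / B)) with ((A + B) * f d1) in H1 by (field; lra).
    nra. }
  destruct (ivt_int (fun u => B * (f u - f (u + d1)) - A * (f (u + d1) - f (u + d2))) lo hi)
    as [u [Hu Gu]]; try lra.
  { intros x Hx. apply (@ex_derive_continuous R_AbsRing R_NormedModule). auto_derive.
    repeat split; apply (sh_exd f Hf); lra. }
  simpl in Gu.
  assert (Hfu : f (u + d1) < f u) by (apply sh_decr; auto; lra).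
  set (a := A / (f u - f (u + d1))).
  exists a, (u - x1), (y1 - a * f u). split; [|split; [|split; [|split]]].
  - apply Rdiv_lt_0_compat; lra.
  - lra.
  - replace (x1 + (u - x1)) with u by ring. ring.
  - replace (x2 + (u - x1)) with (u + d1) by (unfold d1; ring). unfold a, A. field. lra.
  - replace (x3 + (u - x1)) with (u + d2) by (unfold d2; ring).
    replace (f (u + d2)) with (f (u + d1) - B * (f u - f (u + d1)) / A).
    unfold a. replace y3 with (y1 - A - B) by (unfold A, B; ring). field. split; lra.
    field_simplify_eq; [|lra]. lra.
Qed.



Lemma p4_split f g (Hf : strongly_hyperbolic f) (Hg : strongly_hyperbolic g) x1 x2 x3 y1 y2 y3 :
  x1 < x2 -> x2 < x3 -> y3 < y2 -> y1 < y3 ->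
  exists a b c, 0 < a /\ x1 < - b < x2 /\ - a * g (- x1 - b) + c = y1 /\
    a * f (x2 + b) + c = y2 /\ a * f (x3 + b) + c = y3.
Proof.
  intros H12 H23 Hy23 Hy13.
  set (D := x2 - x1). set (d := x3 - x2).
  assert (HD : 0 < D) by (unfold D; lra).
  assert (Hd : 0 < d) by (unfold d; lra).
  destruct (sh_lim0 f Hf (((y2 - y1) * f d + (y2 - y3) * g (D / 2)) / (y3 - y1))) as [del [Hdel Hlo]].
  set (lo := Rmin del (D / 2) / 2).
  assert (lo0 : 0 < lo <= D / 4).
  { unfold lo, Rmin; destruct Rle_dec; lra. }
  assert (Glo : 0 < (y3 - y1) * f lo - (y2 - y1) * f (lo + d) - (y2 - y3) * g (D - lo)).
  { assert (H1 : ((y2 - y1) * f d + (y2 - y3) * g (D / 2)) / (y3 - y1) < f lo).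
    { apply Hlo. split; [lra|]. unfold lo, Rmin; destruct Rle_dec; lra. }
    assert (g (D - lo) < g (D / 2)) by (apply sh_decr; auto; lra).
    assert (f (lo + d) < f d) by (apply sh_decr; auto; lra).
    apply (Rmult_lt_compat_l (y3 - y1)) in H1; [|lra].
    replace ((y3 - y1) * (((y2 - y1) * f d + (y2 - y3) * g (D / 2)) / (y3 - y1)))
      with ((y2 - y1) * f d + (y2 - y3) * g (D / 2)) in H1 by (field; lra).
    nra. }
  destruct (sh_lim0 g Hg ((y3 - y1) * f (D / 2) / (y2 - y3))) as [del' [Hdel' Hhi]].
  set (w := Rmin del' (D / 2) / 2).
  assert (w0 : 0 < w <= D / 4).
  { unfold w, Rmin; destruct Rle_dec; lra. }
  set (hi := D - w).
  assert (Ghi : (y3 - y1) * f hi - (y2 - y1) * f (hi + d) - (y2 - y3) * g (D - hi) < 0).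
  { assert (H1 : (y3 - y1) * f (D / 2) / (y2 - y3) < g (D - hi)).
    { apply Hhi. unfold hi. replace (D - (D - w)) with w by ring. split; [lra|].
      unfold w, Rmin; destruct Rle_dec; lra. }
    assert (f hi < f (D / 2)) by (apply sh_decr; auto; unfold hi; lra).
    assert (0 < f (hi + d)) by (apply sh_pos; auto; unfold hi; lra).
    apply (Rmult_lt_compat_l (y2 - y3)) in H1; [|lra].
    replace ((y2 - y3) * ((y3 - y1) * f (D / 2) / (y2 - y3))) with ((y3 - y1) * f (D / 2)) in H1
      by (field; lra).
    nra. }
  destruct (ivt_int (fun u => (y3 - y1) * f u - (y2 - y1) * f (u + d) - (y2 - y3) * g (D - u)) lo hi)
    as [u [Hu Gu]]; auto.
  { unfold hi; lra. }
  { intros x Hx. apply (@ex_derive_continuous R_AbsRing R_NormedModule). auto_derive.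
    unfold hi in Hx.
    repeat split; try apply (sh_exd f Hf); try apply (sh_exd g Hg); lra. }
  simpl in Gu. unfold hi in Hu.
  assert (Hfu : f (u + d) < f u) by (apply sh_decr; auto; lra).
  set (a := (y2 - y3) / (f u - f (u + d))).
  exists a, (u - x2), (y2 - a * f u). split; [|split; [|split; [|split]]].
  - apply Rdiv_lt_0_compat; lra.
  - unfold D in *; lra.
  - replace (- x1 - (u - x2)) with (D - u) by (unfold D; ring).
    replace (g (D - u)) with (((y3 - y1) * f u - (y2 - y1) * f (u + d)) / (y2 - y3)).
    unfold a. field. split; lra.
    field_simplify_eq; [|lra]. lra.
  - replace (x2 + (u - x2)) with u by ring. ring.
  - replace (x3 + (u - x2)) with (u + d) by (unfold d; ring). unfold a. field. lra.
Qed.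



Definition Q f1 f2 (p1 p2 p3 : point) :=
  exists C : point -> Prop, in_Cminus f1 f2 C /\ C p1 /\ C p2 /\ C p3.

Lemma Q_12 f1 f2 p1 p2 p3 : Q f1 f2 p2 p1 p3 -> Q f1 f2 p1 p2 p3.
Proof. intros (C&H&H1&H2&H3); exists C; tauto. Qed.
Lemma Q_23 f1 f2 p1 p2 p3 : Q f1 f2 p1 p3 p2 -> Q f1 f2 p1 p2 p3.
Proof. intros (C&H&H1&H2&H3); exists C; tauto. Qed.
Lemma Q_13 f1 f2 p1 p2 p3 : Q f1 f2 p3 p2 p1 -> Q f1 f2 p1 p2 p3.
Proof. intros (C&H&H1&H2&H3); exists C; tauto. Qed.

Lemma fb_right f1 f2 a b c x y : - b < x -> y = a * f1 (x + b) + c ->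
  fabc_bar f1 f2 a b c (Some x, Some y).
Proof.
  intros Hx Hy. left. exists x. split; [lra|]. unfold fabc.
  destruct Rlt_dec; [subst; reflexivity|lra].
Qed.

Lemma fb_left f1 f2 a b c x y : x < - b -> y = - a * f2 (- x - b) + c ->
  fabc_bar f1 f2 a b c (Some x, Some y).
Proof.
  intros Hx Hy. left. exists x. split; [lra|]. unfold fabc.
  destruct Rlt_dec; [lra|subst; reflexivity].
Qed.

Lemma fb_I1 f1 f2 a b c : fabc_bar f1 f2 a b c (None, Some c).
Proof. right; right; reflexivity. Qed.

Lemma fb_I2 f1 f2 a b c b' : b' = - b -> fabc_bar f1 f2 a b c (Some b', None).
Proof. intros ->. right; left; reflexivity. Qed.

Lemma inC f1 f2 a b c : 0 < a -> in_Cminus f1 f2 (fabc_bar f1 f2 a b c).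
Proof. intros Ha. left. exists a, b, c. auto. Qed.

Lemma inv_decr a u v : 0 < a -> u < v -> 0 < u * v -> a / v < a / u.
Proof.
  intros Ha Huv Hp.
  assert (0 < a / u - a / v).
  { replace (a / u - a / v) with (a * (v - u) / (u * v)).
    apply Rdiv_lt_0_compat; nra.
    field. split; intro; subst; lra. }
  lra.
Qed.

Lemma hyp_y a b c x y : 0 < a -> (x - b) * (y - c) = a -> x <> b /\ y = c + a / (x - b).
Proof.
  intros Ha H. assert (x - b <> 0) by (intro E; rewrite E in H; lra).
  split. lra. rewrite <- H. field. auto.
Qed.

Lemma hyp_conv a u1 u2 u3 : u1 <> 0 -> u2 <> 0 -> u3 <> 0 ->
  (a / u1 - a / u2) * (u3 - u2) - (a / u2 - a / u3) * (u2 - u1) =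
  a * (u3 - u2) * (u2 - u1) * (u3 - u1) / (u1 * u2 * u3).
Proof. intros. field. auto. Qed.

Lemma fin3_sorted f1 f2 (Hf1 : strongly_hyperbolic f1) (Hf2 : strongly_hyperbolic f2)
  a b c x1 x2 x3 y1 y2 y3 : 0 < a -> x1 < x2 -> x2 < x3 ->
  (x1 - b) * (y1 - c) = a -> (x2 - b) * (y2 - c) = a -> (x3 - b) * (y3 - c) = a ->
  Q f1 f2 (Some x1, Some y1) (Some x2, Some y2) (Some x3, Some y3).
Proof.
  intros Ha H12 H23 E1 E2 E3.
  destruct (hyp_y a b c x1 y1 Ha E1) as [n1 e1].
  destruct (hyp_y a b c x2 y2 Ha E2) as [n2 e2].
  destruct (hyp_y a b c x3 y3 Ha E3) as [n3 e3].
  subst y1 y2 y3. clear E1 E2 E3.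
  assert (m1 : x1 - b <> 0) by lra. assert (m2 : x2 - b <> 0) by lra.
  assert (m3 : x3 - b <> 0) by lra.
  pose proof (hyp_conv a _ _ _ m1 m2 m3) as Hd.
  replace (x3 - b - (x2 - b)) with (x3 - x2) in Hd by ring.
  replace (x2 - b - (x1 - b)) with (x2 - x1) in Hd by ring.
  replace (x3 - b - (x1 - b)) with (x3 - x1) in Hd by ring.
  destruct (Rlt_or_le b x1) as [R1|L1].
  {
    assert (P : 0 < a * (x3 - x2) * (x2 - x1) * (x3 - x1) / ((x1 - b) * (x2 - b) * (x3 - b))).
    { apply Rdiv_lt_0_compat; repeat apply Rmult_lt_0_compat; lra. }
    assert (I12 : a / (x2 - b) < a / (x1 - b)) by (apply inv_decr; nra).
    assert (I23 : a / (x3 - b) < a / (x2 - b)) by (apply inv_decr; nra).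
    destruct (p3_convex f1 Hf1 x1 x2 x3 (c + a / (x1 - b)) (c + a / (x2 - b)) (c + a / (x3 - b)))
      as (a' & be & c' & Ha' & Hx1 & F1 & F2 & F3); try lra.
    exists (fabc_bar f1 f2 a' be c'). split; [apply inC; auto|].
    split; [|split]; apply fb_right; lra. }
  destruct (Rlt_or_le x3 b) as [R3|L3].
  {
    assert (P : a * (x3 - x2) * (x2 - x1) * (x3 - x1) / ((x1 - b) * (x2 - b) * (x3 - b)) < 0).
    { unfold Rdiv. apply Rmult_pos_neg. repeat apply Rmult_lt_0_compat; lra.
      apply Rinv_lt_0_compat. assert (0 < (x1 - b) * (x2 - b)) by nra. nra. }
    assert (I12 : a / (x2 - b) < a / (x1 - b)) by (apply inv_decr; nra).
    assert (I23 : a / (x3 - b) < a / (x2 - b)) by (apply inv_decr; nra).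
    destruct (p3_convex f2 Hf2 (- x3) (- x2) (- x1) (- (c + a / (x3 - b))) (- (c + a / (x2 - b)))
      (- (c + a / (x1 - b)))) as (a' & be & c' & Ha' & Hx1 & F1 & F2 & F3); try lra.
    exists (fabc_bar f1 f2 a' (- be) (- c')). split; [apply inC; auto|].
    split; [|split]; apply fb_left; try lra.
    - replace (- x1 - - be) with (- x1 + be) by ring. lra.
    - replace (- x2 - - be) with (- x2 + be) by ring. lra.
    - replace (- x3 - - be) with (- x3 + be) by ring. lra. }
  destruct (Rlt_or_le b x2) as [R2|L2].
  {
    assert (x1 < b) by (destruct L1; auto; subst; lra).
    assert (I23 : a / (x3 - b) < a / (x2 - b)) by (apply inv_decr; nra).
    assert (0 < a / (x3 - b)) by (apply Rdiv_lt_0_compat; lra).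
    assert (a / (x1 - b) < 0) by (unfold Rdiv; apply Rmult_pos_neg; [lra|apply Rinv_lt_0_compat; lra]).
    destruct (p4_split f1 f2 Hf1 Hf2 x1 x2 x3 (c + a / (x1 - b)) (c + a / (x2 - b)) (c + a / (x3 - b)))
      as (a' & be & c' & Ha' & Hx & F1 & F2 & F3); try lra.
    exists (fabc_bar f1 f2 a' be c'). split; [apply inC; auto|].
    split; [|split]; [apply fb_left|apply fb_right|apply fb_right]; lra. }
  {
    assert (x2 < b) by (destruct L2; auto; subst; lra).
    assert (b < x3) by (destruct L3; auto; subst; lra).
    assert (I12 : a / (x2 - b) < a / (x1 - b)) by (apply inv_decr; nra).
    assert (0 < a / (x3 - b)) by (apply Rdiv_lt_0_compat; lra).
    assert (a / (x1 - b) < 0) by (unfold Rdiv; apply Rmult_pos_neg; [lra|apply Rinv_lt_0_compat; lra]).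
    destruct (p4_split f2 f1 Hf2 Hf1 (- x3) (- x2) (- x1) (- (c + a / (x3 - b))) (- (c + a / (x2 - b)))
      (- (c + a / (x1 - b)))) as (a' & be & c' & Ha' & Hx & F1 & F2 & F3); try lra.
    exists (fabc_bar f1 f2 a' (- be) (- c')). split; [apply inC; auto|].
    split; [|split]; [apply fb_left|apply fb_left|apply fb_right]; try lra.
    - replace (- x1 - - be) with (- x1 + be) by ring. lra.
    - replace (- x2 - - be) with (- x2 + be) by ring. lra.
    - replace (x3 + - be) with (- - x3 - be) by ring. lra. }
Qed.

Lemma I1_sorted f1 f2 (Hf1 : strongly_hyperbolic f1) (Hf2 : strongly_hyperbolic f2)
  a b c x1 x2 y1 y2 : 0 < a -> x1 < x2 ->
  (x1 - b) * (y1 - c) = a -> (x2 - b) * (y2 - c) = a ->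
  Q f1 f2 (None, Some c) (Some x1, Some y1) (Some x2, Some y2).
Proof.
  intros Ha H12 E1 E2.
  destruct (hyp_y a b c x1 y1 Ha E1) as [n1 e1].
  destruct (hyp_y a b c x2 y2 Ha E2) as [n2 e2].
  subst y1 y2. clear E1 E2.
  destruct (Rlt_or_le b x1) as [R1|L1].
  { assert (I12 : a / (x2 - b) < a / (x1 - b)) by (apply inv_decr; nra).
    assert (0 < a / (x2 - b)) by (apply Rdiv_lt_0_compat; lra).
    destruct (p1_ratio f1 Hf1 x1 x2 (c + a / (x1 - b)) (c + a / (x2 - b)) c) as (a' & be & Ha' & Hx & F1 & F2);
      try lra.
    exists (fabc_bar f1 f2 a' be c). split; [apply inC; auto|].
    split; [apply fb_I1|split]; apply fb_right; lra. }
  destruct (Rlt_or_le x2 b) as [R2|L2].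
  { assert (I12 : a / (x2 - b) < a / (x1 - b)) by (apply inv_decr; nra).
    assert (a / (x1 - b) < 0) by (unfold Rdiv; apply Rmult_pos_neg; [lra|apply Rinv_lt_0_compat; lra]).
    destruct (p1_ratio f2 Hf2 (- x2) (- x1) (- (c + a / (x2 - b))) (- (c + a / (x1 - b))) (- c))
      as (a' & be & Ha' & Hx & F1 & F2); try lra.
    exists (fabc_bar f1 f2 a' (- be) c). split; [apply inC; auto|].
    split; [apply fb_I1|split]; apply fb_left; try lra.
    - replace (- x1 - - be) with (- x1 + be) by ring. lra.
    - replace (- x2 - - be) with (- x2 + be) by ring. lra. }
  assert (x1 < b) by (destruct L1; auto; subst; lra).
  assert (b < x2) by (destruct L2; auto; subst; lra).
  assert (0 < a / (x2 - b)) by (apply Rdiv_lt_0_compat; lra).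
  assert (a / (x1 - b) < 0) by (unfold Rdiv; apply Rmult_pos_neg; [lra|apply Rinv_lt_0_compat; lra]).
  destruct (p2_split f1 f2 Hf1 Hf2 x1 x2 (c + a / (x1 - b)) (c + a / (x2 - b)) c)
    as (a' & be & Ha' & Hx & F1 & F2); try lra.
  exists (fabc_bar f1 f2 a' be c). split; [apply inC; auto|].
  split; [apply fb_I1|split]; [apply fb_left|apply fb_right]; lra.
Qed.

Lemma I2_sorted f1 f2 (Hf1 : strongly_hyperbolic f1) (Hf2 : strongly_hyperbolic f2)
  a b c x1 x2 y1 y2 : 0 < a -> x1 < x2 ->
  (x1 - b) * (y1 - c) = a -> (x2 - b) * (y2 - c) = a ->
  Q f1 f2 (Some b, None) (Some x1, Some y1) (Some x2, Some y2).
Proof.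
  intros Ha H12 E1 E2.
  destruct (hyp_y a b c x1 y1 Ha E1) as [n1 e1].
  destruct (hyp_y a b c x2 y2 Ha E2) as [n2 e2].
  subst y1 y2. clear E1 E2.
  set (y1 := c + a / (x1 - b)). set (y2 := c + a / (x2 - b)).
  destruct (Rlt_or_le b x1) as [R1|L1].
  { assert (I12 : a / (x2 - b) < a / (x1 - b)) by (apply inv_decr; nra).
    assert (Hf : f1 (x2 + - b) < f1 (x1 + - b)) by (apply (sh_decr f1 Hf1); lra).
    set (a' := (y1 - y2) / (f1 (x1 + - b) - f1 (x2 + - b))).
    exists (fabc_bar f1 f2 a' (- b) (y1 - a' * f1 (x1 + - b))). split.
    { apply inC. apply Rdiv_lt_0_compat; unfold y1, y2; lra. }
    split; [apply fb_I2; ring|split]; apply fb_right; try lra.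
    unfold a'. field. lra. }
  destruct (Rlt_or_le x2 b) as [R2|L2].
  { assert (I12 : a / (x2 - b) < a / (x1 - b)) by (apply inv_decr; nra).
    assert (Hf : f2 (- x1 - - b) < f2 (- x2 - - b)) by (apply (sh_decr f2 Hf2); lra).
    set (a' := (y1 - y2) / (f2 (- x2 - - b) - f2 (- x1 - - b))).
    exists (fabc_bar f1 f2 a' (- b) (y1 + a' * f2 (- x1 - - b))). split.
    { apply inC. apply Rdiv_lt_0_compat; unfold y1, y2; lra. }
    split; [apply fb_I2; ring|split]; apply fb_left; try lra.
    unfold a'. field. lra. }
  assert (x1 < b) by (destruct L1; auto; subst; lra).
  assert (b < x2) by (destruct L2; auto; subst; lra).
  assert (0 < a / (x2 - b)) by (apply Rdiv_lt_0_compat; lra).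
  assert (a / (x1 - b) < 0) by (unfold Rdiv; apply Rmult_pos_neg; [lra|apply Rinv_lt_0_compat; lra]).
  assert (0 < f1 (x2 + - b)) by (apply (sh_pos f1 Hf1); lra).
  assert (0 < f2 (- x1 - - b)) by (apply (sh_pos f2 Hf2); lra).
  set (a' := (y2 - y1) / (f1 (x2 + - b) + f2 (- x1 - - b))).
  exists (fabc_bar f1 f2 a' (- b) (y2 - a' * f1 (x2 + - b))). split.
  { apply inC. apply Rdiv_lt_0_compat; unfold y1, y2; lra. }
  split; [apply fb_I2; ring|split]; [apply fb_left|apply fb_right]; try lra.
  unfold a'. field. lra.
Qed.

Lemma IJ f1 f2 (Hf1 : strongly_hyperbolic f1) (Hf2 : strongly_hyperbolic f2)
  a b c x y : 0 < a -> (x - b) * (y - c) = a ->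
  Q f1 f2 (None, Some c) (Some b, None) (Some x, Some y).
Proof.
  intros Ha E.
  destruct (hyp_y a b c x y Ha E) as [n e]. subst y. clear E.
  destruct (Rlt_or_le b x) as [R|L].
  { assert (0 < a / (x - b)) by (apply Rdiv_lt_0_compat; lra).
    assert (0 < f1 (x + - b)) by (apply (sh_pos f1 Hf1); lra).
    exists (fabc_bar f1 f2 (a / (x - b) / f1 (x + - b)) (- b) c). split.
    { apply inC. apply Rdiv_lt_0_compat; lra. }
    split; [apply fb_I1|split; [apply fb_I2; ring|]]. apply fb_right; try lra.
    field. lra. }
  assert (x < b) by (destruct L; auto; subst; lra).
  assert (a / (x - b) < 0) by (unfold Rdiv; apply Rmult_pos_neg; [lra|apply Rinv_lt_0_compat; lra]).
  assert (0 < f2 (- x - - b)) by (apply (sh_pos f2 Hf2); lra).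
  exists (fabc_bar f1 f2 (- (a / (x - b)) / f2 (- x - - b)) (- b) c). split.
  { apply inC. apply Rdiv_lt_0_compat; lra. }
  split; [apply fb_I1|split; [apply fb_I2; ring|]]. apply fb_left; try lra.
  field. lra.
Qed.

Lemma hyp_xneq a b c x1 y1 x2 y2 : 0 < a -> (x1 - b) * (y1 - c) = a -> (x2 - b) * (y2 - c) = a ->
  (Some x1, Some y1) <> (Some x2, Some y2) -> x1 < x2 \/ x2 < x1.
Proof.
  intros Ha E1 E2 Hn.
  destruct (Rtotal_order x1 x2) as [H|[H|H]]; auto. exfalso. apply Hn. subst x2.
  destruct (hyp_y a b c x1 y1 Ha E1) as [_ e1].
  destruct (hyp_y a b c x1 y2 Ha E2) as [_ e2]. congruence.
Qed.

Lemma fin3 f1 f2 (Hf1 : strongly_hyperbolic f1) (Hf2 : strongly_hyperbolic f2)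
  a b c x1 x2 x3 y1 y2 y3 : 0 < a ->
  (x1 - b) * (y1 - c) = a -> (x2 - b) * (y2 - c) = a -> (x3 - b) * (y3 - c) = a ->
  (Some x1, Some y1) <> (Some x2, Some y2) -> (Some x1, Some y1) <> (Some x3, Some y3) ->
  (Some x2, Some y2) <> (Some x3, Some y3) ->
  Q f1 f2 (Some x1, Some y1) (Some x2, Some y2) (Some x3, Some y3).
Proof.
  intros Ha E1 E2 E3 N12 N13 N23.
  destruct (hyp_xneq a b c _ _ _ _ Ha E1 E2 N12) as [A|A];
  destruct (hyp_xneq a b c _ _ _ _ Ha E1 E3 N13) as [B|B];
  destruct (hyp_xneq a b c _ _ _ _ Ha E2 E3 N23) as [C|C].
  all: first [ lra
    | eapply fin3_sorted; eauto; fail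
    | apply Q_12; eapply fin3_sorted; eauto; fail
    | apply Q_23; eapply fin3_sorted; eauto; fail
    | apply Q_13; eapply fin3_sorted; eauto; fail
    | apply Q_12, Q_23; eapply fin3_sorted; eauto; fail
    | apply Q_23, Q_12; eapply fin3_sorted; eauto; fail ].
Qed.

Lemma I1_two f1 f2 (Hf1 : strongly_hyperbolic f1) (Hf2 : strongly_hyperbolic f2)
  a b c x1 x2 y1 y2 : 0 < a ->
  (x1 - b) * (y1 - c) = a -> (x2 - b) * (y2 - c) = a ->
  (Some x1, Some y1) <> (Some x2, Some y2) ->
  Q f1 f2 (None, Some c) (Some x1, Some y1) (Some x2, Some y2).
Proof.
  intros Ha E1 E2 N.
  destruct (hyp_xneq a b c _ _ _ _ Ha E1 E2 N) as [A|A].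
  - eapply I1_sorted; eauto.
  - apply Q_23. eapply I1_sorted; eauto.
Qed.

Lemma I2_two f1 f2 (Hf1 : strongly_hyperbolic f1) (Hf2 : strongly_hyperbolic f2)
  a b c x1 x2 y1 y2 : 0 < a ->
  (x1 - b) * (y1 - c) = a -> (x2 - b) * (y2 - c) = a ->
  (Some x1, Some y1) <> (Some x2, Some y2) ->
  Q f1 f2 (Some b, None) (Some x1, Some y1) (Some x2, Some y2).
Proof.
  intros Ha E1 E2 N.
  destruct (hyp_xneq a b c _ _ _ _ Ha E1 E2 N) as [A|A].
  - eapply I2_sorted; eauto.
  - apply Q_23. eapply I2_sorted; eauto.
Qed.

Ltac fin_case f1 f2 Hf1 Hf2 :=
  first [ eapply (fin3 f1 f2 Hf1 Hf2); eauto
        | eapply (I1_two f1 f2 Hf1 Hf2); eauto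
        | eapply (I2_two f1 f2 Hf1 Hf2); eauto
        | eapply (IJ f1 f2 Hf1 Hf2); eauto ].

Ltac perm_case f1 f2 Hf1 Hf2 :=
  first [ fin_case f1 f2 Hf1 Hf2
        | apply Q_12; fin_case f1 f2 Hf1 Hf2
        | apply Q_23; fin_case f1 f2 Hf1 Hf2
        | apply Q_13; fin_case f1 f2 Hf1 Hf2
        | apply Q_12; apply Q_23; fin_case f1 f2 Hf1 Hf2
        | apply Q_23; apply Q_12; fin_case f1 f2 Hf1 Hf2 ].

Theorem theorem4p2 (f1 f2 : R -> R) (p1 p2 p3 : point) :
  strongly_hyperbolic f1 -> strongly_hyperbolic f2 ->
  p1 <> p2 -> p1 <> p3 -> p2 <> p3 ->
  admissible p1 p2 p3 ->
  exists C : point -> Prop, in_Cminus f1 f2 C /\ C p1 /\ C p2 /\ C p3.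
Proof.
  intros Hf1 Hf2 N12 N13 N23 [(s & t & Hs & H1 & H2 & H3) | (a & b & c & Ha & H1 & H2 & H3)].
  - exists (lst_bar s t). split; [right; exists s, t; auto|auto].
  - change (Q f1 f2 p1 p2 p3).
    assert (N21 : p2 <> p1) by auto. assert (N31 : p3 <> p1) by auto.
    assert (N32 : p3 <> p2) by auto.
    destruct H1 as [(x1 & y1 & E1 & ->) | [-> | ->]];
    destruct H2 as [(x2 & y2 & E2 & ->) | [-> | ->]];
    destruct H3 as [(x3 & y3 & E3 & ->) | [-> | ->]];
    try congruence; perm_case f1 f2 Hf1 Hf2.
Qed.
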